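(* Let $(M,d)$ be a pointed metric space. The space $\mathrm{Lip}_0(M)$ has the LD2P if and only if for every optimal $\mu\in ba(\widetilde M)$ with $\|\mu\|=1$ and every $\gamma\in(0,1)$ there exist $A\subseteq\widetilde M$ and $u,v\in M$ with $u\ne v$ such that $\mu(A)\ge\gamma$ and both $A\cup\{(u,v)\}$ and $A\cup\{(v,u)\}$ are $\gamma$-cyclically monotonic.
   Context: $M$ has base point $0$; $\mathrm{Lip}_0(M)$ is the real Banach space of Lipschitz $f\colon M\to\mathbb R$ with $f(0)=0$, normed by the best Lipschitz constant. A Banach space $X$ has the local diameter 2 property (LD2P) if every slice $S(x^*,\alpha)=\{x\in B_X: x^*(x)>1-\alpha\}$ ($x^*\in X^*$, $\|x^*\|=1$, $\alpha>0$) of the unit ball has diameter $2$. $\widetilde M=\{(x,y)\in M\times M:x\ne y\}$. $ba(\widetilde M)$ is the Banach space of bounded finitely additive signed measures on the power set of $\widetilde M$ with norm $|\mu|(\widetilde M)$. $\Phi f(x,y)=(f(x)-f(y))/d(x,y)$ (de Leeuw map) and $(\Phi^*\mu)(f)=\int_{\widetilde M}\Phi f\,d\mu$. $\mu$ is optimal if it is positive and $\|\Phi^*\mu\|=\|\mu\|$. For $\gamma\in(0,1]$, $A\subseteq\widetilde M$ is $\gamma$-cyclically monotonic if for every finite sequence $(x_1,y_1),\dots,(x_n,y_n)\in A$, with $y_{n+1}=y_1$, $\sum_{i=1}^n\min\{d(x_i,y_{i+1})-\gamma d(x_i,y_i),\,d(y_i,y_{i+1})\}\ge0$. *)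

(* Defs.v *)
From HB Require Import structures.
From mathcomp Require Import all_boot all_order all_algebra.
From mathcomp Require Import all_classical all_reals.
Set Implicit Arguments. Unset Strict Implicit. Unset Printing Implicit Defensive.
Import Order.TTheory GRing.Theory Num.Theory.
Local Open Scope ring_scope.
Local Open Scope classical_set_scope.

Section Defs.
Variables (R : realType) (M : Type) (d : M -> M -> R) (z : M).

Definition is_metric : Prop :=
  (forall x y, 0 <= d x y) /\ (forall x y, d x y = 0 <-> x = y) /\
  (forall x y, d x y = d y x) /\ (forall x y w, d x w <= d x y + d y w).

Definition lipschitz (f : M -> R) : Prop :=
  exists L : R, forall x y, `|f x - f y| <= L * d x y.

Definition Lip0 : set (M -> R) := [set f | lipschitz f /\ f z = 0].

Definition lipnorm (f : M -> R) : R :=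
  sup [set r | exists x y, x <> y /\ r = `|f x - f y| / d x y].

Definition unit_ball : set (M -> R) := [set f | Lip0 f /\ lipnorm f <= 1].

(** elements of the dual Lip0(M)^*: bounded linear functionals on Lip0(M)
    (represented as maps (M -> R) -> R whose behaviour off Lip0(M) is irrelevant) *)
Definition is_dual (phi : (M -> R) -> R) : Prop :=
  (forall (a : R) f g, Lip0 f -> Lip0 g ->
      phi (fun x => a * f x + g x) = a * phi f + phi g) /\
  (exists C : R, forall f, Lip0 f -> `|phi f| <= C * lipnorm f).

Definition dualnorm (phi : (M -> R) -> R) : R :=
  sup [set r | exists f, unit_ball f /\ r = `|phi f|].

Definition slice (phi : (M -> R) -> R) (alpha : R) : set (M -> R) :=
  [set f | unit_ball f /\ 1 - alpha < phi f].

Definition diam_Lip (S : set (M -> R)) : R :=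
  sup [set r | exists f g, S f /\ S g /\ r = lipnorm (fun x => f x - g x)].

Definition LD2P : Prop :=
  forall phi, is_dual phi -> dualnorm phi = 1 ->
  forall alpha : R, 0 < alpha -> diam_Lip (slice phi alpha) = 2.

Definition Mt := {p : M * M | p.1 <> p.2}.

Definition deLeeuw (f : M -> R) (p : Mt) : R :=
  (f (proj1_sig p).1 - f (proj1_sig p).2) / d (proj1_sig p).1 (proj1_sig p).2.

Definition disj_family (n : nat) (A : nat -> set Mt) : Prop :=
  forall i j, (i < n)%N -> (j < n)%N -> i <> j -> A i `&` A j = set0.

Definition fin_additive (mu : set Mt -> R) : Prop :=
  forall A B, A `&` B = set0 -> mu (A `|` B) = mu A + mu B.

Definition totvar (mu : set Mt -> R) : R :=
  sup [set r | exists n A, disj_family n A /\ r = \sum_(i < n) `|mu (A i)|].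

Definition is_ba (mu : set Mt -> R) : Prop :=
  fin_additive mu /\
  exists C : R, forall n A, disj_family n A -> \sum_(i < n) `|mu (A i)| <= C.

Definition positive_measure (mu : set Mt -> R) : Prop := forall A, 0 <= mu A.

(** integral of a bounded function w.r.t. a POSITIVE finitely additive measure
    on the power set: supremum of the lower sums over finite partitions *)
Definition pos_integral (mu : set Mt -> R) (g : Mt -> R) : R :=
  sup [set r | exists n A, disj_family n A /\
        (forall p, exists i, (i < n)%N /\ A i p) /\
        r = \sum_(i < n) inf (g @` A i) * mu (A i)].

Definition Phistar (mu : set Mt -> R) : (M -> R) -> R :=
  fun f => pos_integral mu (deLeeuw f).

Definition optimal (mu : set Mt -> R) : Prop :=
  is_ba mu /\ positive_measure mu /\ dualnorm (Phistar mu) = totvar mu.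

Definition cyc_monotone (gamma : R) (B : set (M * M)) : Prop :=
  forall (n : nat) (s : nat -> M * M), (0 < n)%N ->
    (forall i, (i < n)%N -> B (s i)) ->
    0 <= \sum_(i < n) Num.min (d (s i).1 (s (i.+1 %% n)%N).2 - gamma * d (s i).1 (s i).2)
                               (d (s i).2 (s (i.+1 %% n)%N).2).

End Defs.

(* Main.v *)
Require Import Defs.
From HB Require Import structures.
From mathcomp Require Import all_boot all_order all_algebra.
From mathcomp Require Import all_classical all_reals.
From mathcomp Require Import ring lra zify.
Import Order.TTheory GRing.Theory Num.Theory.
Local Open Scope ring_scope.
Local Open Scope classical_set_scope.
Set Implicit Arguments. Unset Strict Implicit. Unset Printing Implicit Defensive.


Section Sup.
Variable R : realType.
Implicit Types E : set R.

Lemma sup_ub_of E (B x : R) : (forall y, E y -> y <= B) -> E x -> x <= sup E.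
Proof.
move=> hB Ex; apply: sup_upper_bound => //; split; first by exists x.
by exists B => y /hB.
Qed.

Lemma sup_le_of E (B : R) : (forall y, E y -> y <= B) -> 0 <= B -> sup E <= B.
Proof.
move=> hB B0; have [[x Ex]|E0] := pselect (exists x, E x).
  by apply: ge_sup; [exists x|move=> y /hB].
have -> : E = set0 by apply/seteqP; split => // y Ey; apply: E0; exists y.
by rewrite sup0.
Qed.

Lemma sup_le_ne E (B : R) : E !=set0 -> (forall y, E y -> y <= B) -> sup E <= B.
Proof. by move=> ne hB; apply: ge_sup. Qed.


Lemma sup_gt_ex E (B x : R) : (forall y, E y -> y <= B) -> E !=set0 -> x < sup E ->
  exists2 y, E y & x < y.
Proof.
move=> hB [y Ey] lt.
have hs : has_sup E by split; [exists y|exists B => w /hB].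
have h0 : 0 < sup E - x by rewrite subr_gt0.
have [e Ee he] := sup_adherent h0 hs.
by exists e => //; move: he; rewrite opprB addrC subrK.
Qed.

Lemma eps_le (x y : R) : (forall e, 0 < e -> x <= y + e) -> x <= y.
Proof.
move=> h; rewrite leNgt; apply/negP => lt.
have := h ((x - y) / 2); rewrite divr_gt0 ?subr_gt0 // => /(_ isT); lra.
Qed.

End Sup.

Section HB.
Variables (R : realType) (T : Type).
Definition lin (a : R) (x y : T -> R) : T -> R := fun t => a * x t + y t.
Definition zf : T -> R := fun _ => 0.
Variables (Dom : set (T -> R)) (p : (T -> R) -> R).
Hypotheses (DomL : forall a x y, Dom x -> Dom y -> Dom (lin a x y))
  (psub : forall x y, Dom x -> Dom y -> p (lin 1 x y) <= p x + p y)
  (phom : forall a x, 0 < a -> Dom x -> p (lin a x zf) = a * p x).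

Definition good (G : set ((T -> R) * R)) :=
 [/\ forall x r r', G (x,r) -> G (x,r') -> r = r',
     forall a x y r s, G (x,r) -> G (y,s) -> G (lin a x y, a*r+s),
     forall x r, G (x,r) -> r <= p x &
     forall x r, G (x,r) -> Dom x].

Lemma good0 G : good G -> forall x r, G (x, r) -> G (zf, 0).
Proof.
case=> _ hl _ _ x r Gx.
have := hl (-1) x x r r Gx Gx.
have -> : lin (-1) x x = zf by apply/funext => t; rewrite /lin /zf; ring.
by have -> : -1 * r + r = 0 by ring.
Qed.

Lemma goodZ G : good G -> G (zf, 0) -> forall a x r, G (x, r) -> G (lin a x zf, a * r).
Proof.
move=> [_ hl _ _] G0 a x r Gx; have := hl a x zf r 0 Gx G0.
by rewrite addr0.
Qed.

Lemma extend G : good G -> G (zf, 0) -> forall x0, Dom x0 ->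
  ~ (exists r, G (x0, r)) ->
  exists G', good G' /\ G `<=` G' /\ ~ G' `<=` G.
Proof.
move=> gG G0 x0 Dx0 nx0.
have [hf hl hp hd] := gG.
pose L := [set v | exists y s, G (y,s) /\ v = s - p (lin (-1) x0 y)].
pose U := [set v | exists y s, G (y,s) /\ v = p (lin 1 x0 y) - s].
have LU : forall l u, L l -> U u -> l <= u.
  move=> _ _ [y [s [Gy ->]]] [y' [s' [Gy' ->]]].
  have G2 := hl 1 y y' s s' Gy Gy'.
  have h1 := hp _ _ G2.
  have e : lin 1 y y' = lin 1 (lin (-1) x0 y) (lin 1 x0 y').
    by apply/funext => t; rewrite /lin; ring.
  have h2 := psub (DomL (-1) Dx0 (hd _ _ Gy)) (DomL 1 Dx0 (hd _ _ Gy')).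
  rewrite -e in h2; lra.
have Lne : L (0 - p (lin (-1) x0 zf)) by exists zf, 0.
have Une : U (p (lin 1 x0 zf) - 0) by exists zf, 0.
set c := sup L.
have Lc : forall l, L l -> l <= c.
  by move=> l Ll; apply: (sup_ub_of (B := p (lin 1 x0 zf) - 0)) => // y Ly; exact: LU.
have cU : forall u, U u -> c <= u.
  by move=> u Uu; apply: sup_le_ne; [exists (0 - p (lin (-1) x0 zf))|move=> y Ly; exact: LU].
pose G' := [set q | exists x r t, G (x,r) /\ q = (lin t x0 x, r + t * c)].
exists G'; split; last split.
- split.
  + move=> x r r' [x1 [r1 [t1 [G1 [= e1 e1']]]]] [x2 [r2 [t2 [G2 [= e2 e2']]]]].
    have ept : forall t, t1 * x0 t + x1 t = t2 * x0 t + x2 t.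
      by move=> t; have := congr1 (fun f => f t) e1; have := congr1 (fun f => f t) e2;
        rewrite /lin => -> ->.
    have [t12|t12] := eqVneq t1 t2.
      subst t2.
      have ex : x1 = x2.
        by apply/funext => t; have := ept t; lra.
      subst x2; rewrite e1' e2' (hf _ _ _ G1 G2) //.
    exfalso; apply: nx0.
    have Gd := hl (-1) x1 x2 r1 r2 G1 G2.
    have Gk := goodZ gG G0 ((t1 - t2)^-1) Gd.
    eexists; have -> : x0 = lin (t1 - t2)^-1 (lin (-1) x1 x2) zf; last exact: Gk.
    apply/funext => t; have h := ept t.
    rewrite /lin /zf.
    have nz : t1 - t2 != 0 by rewrite subr_eq0.
    apply: (mulfI nz); rewrite addr0 mulrA mulfV // mul1r.
    lra.
  + move=> a x y r s [x1 [r1 [t1 [G1 [= -> ->]]]]] [x2 [r2 [t2 [G2 [= -> ->]]]]].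
    exists (lin a x1 x2), (a * r1 + r2), (a * t1 + t2); split; first exact: hl.
    congr pair; last by ring.
    by apply/funext => t; rewrite /lin; ring.
  + move=> x r [x1 [r1 [t1 [G1 [= -> ->]]]]].
    have [t0|t0] := ltP 0 t1.
      have Gy := goodZ gG G0 (t1^-1) G1.
      have := cU _ (ex_intro _ _ (ex_intro _ _ (conj Gy erefl))).
      have e : lin t1 x0 x1 = lin t1 (lin 1 x0 (lin t1^-1 x1 zf)) zf.
        apply/funext => t; rewrite /lin /zf; field; lra.
      rewrite e phom //; last exact: DomL Dx0 (DomL _ (hd _ _ G1) (hd _ _ G0)).
      move=> h; have h' := ler_wpM2l (ltW t0) h.
      move: h'; rewrite mulrBr mulrA mulfV ?mul1r; last by lra.
      lra.
    have [t00|t00] := eqVneq t1 0.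
      subst t1; have -> : lin 0 x0 x1 = x1 by apply/funext => t; rewrite /lin; ring.
      by rewrite mul0r addr0; exact: hp G1.
    have tn : 0 < - t1 by lra.
    have Gy := goodZ gG G0 ((- t1)^-1) G1.
    have := Lc _ (ex_intro _ _ (ex_intro _ _ (conj Gy erefl))).
    have e : lin t1 x0 x1 = lin (- t1) (lin (-1) x0 (lin (- t1)^-1 x1 zf)) zf.
      apply/funext => t; rewrite /lin /zf; field; lra.
    rewrite e phom //; last exact: DomL Dx0 (DomL _ (hd _ _ G1) (hd _ _ G0)).
    move=> h; have h' := ler_wpM2l (ltW tn) h.
    move: h'; rewrite mulrBr mulrA mulfV ?mul1r; last by lra.
    lra.
  + move=> x r [x1 [r1 [t1 [G1 [= -> _]]]]]; exact: DomL (hd _ _ G1).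
- move=> [x r] Gx; exists x, r, 0; split => //.
  congr pair; last by ring.
  by apply/funext => t; rewrite /lin; ring.
- move=> sub; apply: nx0; exists (0 + 1 * c).
  have : G' (lin 1 x0 zf, 0 + 1 * c) by exists zf, 0, 1.
  move=> /sub; suff -> : lin 1 x0 zf = x0 by [].
  by apply/funext => t; rewrite /lin /zf; ring.
Qed.

Theorem hahn_banach G0 : good G0 -> G0 (zf, 0) ->
  exists L : (T -> R) -> R,
    [/\ forall a x y, Dom x -> Dom y -> L (lin a x y) = a * L x + L y,
        forall x, Dom x -> L x <= p x &
        forall x r, G0 (x, r) -> L x = r].
Proof.
move=> gG0 G00.
pose P := fun A : set ((T -> R) * R) => good (A `|` G0).
have chainP : forall F : set (set ((T -> R) * R)), F `<=` P -> total_on F subset ->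
    P (\bigcup_(X in F) X).
  move=> F FP tot.
  set U := (\bigcup_(X in F) X) `|` G0.
  have two : forall q1 q2, U q1 -> U q2 ->
      exists S, good S /\ S `<=` U /\ S q1 /\ S q2.
    have inS : forall A, F A -> A `|` G0 `<=` U.
      by move=> A FA q [Aq|Gq]; [left; exists A|right].
    move=> q1 q2 [[A1 FA1 A1q]|G1] [[A2 FA2 A2q]|G2].
    - have [s12|s21] := tot _ _ FA1 FA2.
        exists (A2 `|` G0); split; first exact: FP.
        by split; [exact: inS|split; left => //; exact: s12].
      exists (A1 `|` G0); split; first exact: FP.
      by split; [exact: inS|split; left => //; exact: s21].
    - exists (A1 `|` G0); split; first exact: FP.
      by split; [exact: inS|split; [left|right]].
    - exists (A2 `|` G0); split; first exact: FP.
      by split; [exact: inS|split; [right|left]].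
    - by exists G0; split => //; split => // q Gq; right.
  split.
  - move=> x r r' h1 h2; have [S [[hf _ _ _] [_ [S1 S2]]]] := two _ _ h1 h2.
    exact: hf S1 S2.
  - move=> a x y r s h1 h2; have [S [[_ hl _ _] [SU [S1 S2]]]] := two _ _ h1 h2.
    exact: SU (hl _ _ _ _ _ S1 S2).
  - move=> x r h1; have [S [[_ _ hp _] [_ [S1 _]]]] := two _ _ h1 h1.
    exact: hp S1.
  - move=> x r h1; have [S [[_ _ _ hd] [_ [S1 _]]]] := two _ _ h1 h1.
    exact: hd S1.
have [A [PA Amax]] := Zorn_bigcup chainP.
set H := A `|` G0.
have H0 : H (zf, 0) by right.
have full : forall x, Dom x -> exists r, H (x, r).
  move=> x Dx; apply: contrapT => nx.
  have [G' [gG' [HG' nG'H]]] := extend PA H0 Dx nx.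
  have prop : A `<` G'.
    split; first by move=> q Aq; apply: HG'; left.
    move=> G'A; apply: nG'H => q /G'A Aq; by left.
  apply: (Amax G' prop); rewrite /P.
  have -> : G' `|` G0 = G' by apply/seteqP; split => [q [//|Gq]|q Gq]; [apply: HG'; right|left].
  exact: gG'.
have [L hL] : exists L : (T -> R) -> R, forall x, Dom x -> H (x, L x).
  have : forall x, exists r, Dom x -> H (x, r).
    move=> x; have [Dx|nDx] := pselect (Dom x).
      by have [r hr] := full x Dx; exists r.
    by exists 0.
  by move=> /choice [L hL]; exists L.
have [hf hl hp hd] := PA.
exists L; split.
- move=> a x y Dx Dy; apply: hf (hL _ (DomL a Dx Dy)) _.
  exact: hl (hL _ Dx) (hL _ Dy).
- by move=> x Dx; exact: hp (hL _ Dx).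
- move=> x r Gx; apply: hf (hL _ (hd _ _ (or_intror Gx))) _; by right.
Qed.
End HB.


Section Integ.
Variables (R : realType) (M : Type) (mu : set (Mt M) -> R).
Hypotheses (fa : fin_additive mu) (pos : positive_measure mu).

Definition cover n (P : nat -> set (Mt M)) := forall p, exists i, (i < n)%N /\ P i p.
Definition lsum n (P : nat -> set (Mt M)) (h : Mt M -> R) :=
  \sum_(i < n) inf (h @` P i) * mu (P i).
Definition bnd (h : Mt M -> R) := exists C : R, forall p, `|h p| <= C.

Lemma eqle (x y : R) : x = y -> x <= y. Proof. by move=> ->. Qed.

Lemma mu0 : mu set0 = 0.
Proof.
have := fa (A := set0) (B := set0); rewrite set0I setU0 => /(_ erefl) h.
lra.
Qed.

Lemma disj_pt n (Q : nat -> set (Mt M)) i j p : disj_family n Q ->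
  (i < n)%N -> (j < n)%N -> i <> j -> Q i p -> Q j p -> False.
Proof. by move=> dQ ilt jlt ij Qi Qj; have /seteqP[h _] := dQ i j ilt jlt ij; exact: h p (conj Qi Qj). Qed.

Lemma mu_sep S B : mu S = mu (S `&` B) + mu (S `&` ~` B).
Proof.
rewrite -fa; last by apply/seteqP; split => // p [[_ a] [_ b]].
congr (mu _); apply/seteqP; split => [p Sp|p [[]|[]]] //.
by have [Qp|nQp] := pselect (B p); [left|right].
Qed.

Lemma mu_mono S S' : S `<=` S' -> mu S <= mu S'.
Proof.
move=> sS; rewrite (mu_sep S' S).
have -> : S' `&` S = S by apply/seteqP; split => [p []|p Sp] //; split => //; exact: sS.
have := pos (S' `&` ~` S); lra.
Qed.

Lemma mu_split n (Q : nat -> set (Mt M)) : disj_family n Q ->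
  forall S, S `<=` (fun p => exists i, (i < n)%N /\ Q i p) ->
  mu S = \sum_(i < n) mu (S `&` Q i).
Proof.
elim: n Q => [|n IH] Q dQ S sS.
  rewrite big_ord0; have -> : S = set0; last exact: mu0.
  by apply/seteqP; split => // p /sS [i [+ _]].
rewrite big_ord_recr /= (mu_sep S (Q n)) addrC; congr (_ + _).
have dQ' : disj_family n Q by move=> i j ilt jlt; apply: dQ; apply: ltnW.
rewrite (IH Q dQ' (S `&` ~` Q n)); last first.
  move=> p [/sS [i [ilt Qi]] nQ]; exists i; split => //.
  move: ilt; rewrite ltnS leq_eqVlt => /orP[/eqP ei|//].
  by subst i.
apply: eq_bigr => i _; congr (mu _).
apply/seteqP; split => [p [[Sp _] Qi]|p [Sp Qi]] //.
split => //; split => // Qn.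
apply: (disj_pt (n := n.+1) (i := i) (j := n) dQ _ _ _ Qi Qn) => //.
- exact: leq_trans (ltn_ord i) (leqnSn n).
- by move=> e; have := ltn_ord i; rewrite e ltnn.
Qed.

Definition triv : nat -> set (Mt M) := fun _ => setT.
Lemma triv_disj : disj_family 1 triv.
Proof. by move=> [|i] [|j] // _ _. Qed.
Lemma triv_cover : cover 1 triv.
Proof. by move=> p; exists 0%N. Qed.

Lemma lsum_le n P (b : nat -> R) h m Q :
  disj_family n P -> cover n P ->
  (forall i, (i < n)%N -> forall p, P i p -> h p <= b i) ->
  (exists lo, forall p, lo <= h p) -> disj_family m Q -> cover m Q ->
  lsum m Q h <= \sum_(i < n) b i * mu (P i).
Proof.
move=> dP cP hb [lo hlo] dQ cQ; rewrite /lsum.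
have e1 : forall j : 'I_m, mu (Q j) = \sum_(i < n) mu (Q j `&` P i).
  by move=> j; apply: (mu_split dP) => p _; exact: cP.
under eq_bigr do rewrite e1 mulr_sumr.
apply: (@le_trans _ _ (\sum_(j < m) \sum_(i < n) b i * mu (Q j `&` P i))).
  apply: ler_sum => j _; apply: ler_sum => i _.
  have [[p [Qp Pp]]|np] := pselect (exists p, (Q j `&` P i) p).
    apply: ler_wpM2r; first exact: pos.
    apply: le_trans (hb i (ltn_ord i) p Pp).
    apply: (ge_inf _ (imageP h Qp)).
    by exists lo => _ [q _ <-]; exact: hlo.
  have -> : Q j `&` P i = set0.
    by apply/seteqP; split => // q Qq; apply: np; exists q.
  by rewrite mu0 !mulr0.
rewrite exchange_big /=; apply: eqle; apply: eq_bigr => i _.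
rewrite -mulr_sumr (mu_split dQ (S := P i)); last by move=> p _; exact: cQ.
by congr (_ * _); apply: eq_bigr => j _; rewrite setIC.
Qed.

Lemma I_le n P (b : nat -> R) h :
  disj_family n P -> cover n P ->
  (forall i, (i < n)%N -> forall p, P i p -> h p <= b i) ->
  (exists lo, forall p, lo <= h p) ->
  pos_integral mu h <= \sum_(i < n) b i * mu (P i).
Proof.
move=> dP cP hb hlo; rewrite /pos_integral; apply: sup_le_ne.
  by exists (lsum 1 triv h), 1%N, triv; split; [exact: triv_disj|split; [exact: triv_cover|]].
move=> r [m [Q [dQ [cQ ->]]]]; exact: lsum_le.
Qed.

Lemma I_ge n P (a : nat -> R) h :
  disj_family n P -> cover n P ->
  (forall i, (i < n)%N -> forall p, P i p -> a i <= h p) ->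
  (exists lo, forall p, lo <= h p) -> (exists hi, forall p, h p <= hi) ->
  \sum_(i < n) a i * mu (P i) <= pos_integral mu h.
Proof.
move=> dP cP ha hlo [hi hhi].
apply: (@le_trans _ _ (lsum n P h)).
  apply: ler_sum => i _.
  have [[p Pp]|np] := pselect (exists p, P i p).
    apply: ler_wpM2r; first exact: pos.
    apply: lb_le_inf; first by exists (h p), p.
    by move=> _ [q Pq <-]; exact: ha.
  have -> : P i = set0.
    by apply/seteqP; split => // q Qq; apply: np; exists q.
  by rewrite mu0 !mulr0.
rewrite /pos_integral; apply: (sup_ub_of (B := \sum_(i < 1) (fun _ => hi) i * mu (triv i))).
  move=> r [m [Q [dQ [cQ ->]]]].
  exact: (lsum_le (b := fun _ => hi) triv_disj triv_cover (fun i _ p _ => hhi p) hlo dQ cQ).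
by exists n, P; split => //; split.
Qed.

Lemma tags (t0 : Mt M) (P : nat -> set (Mt M)) :
  exists t : nat -> Mt M, forall i, (exists p, P i p) -> P i (t i).
Proof.
have : forall i, exists t, (exists p, P i p) -> P i t.
  move=> i; have [[p Pp]|np] := pselect (exists p, P i p).
    by exists p.
  by exists t0.
by move/choice => [t ht]; exists t.
Qed.

Lemma mu_sumT n P : disj_family n P -> cover n P ->
  \sum_(i < n) mu (P i) = mu setT.
Proof.
move=> dP cP; rewrite (mu_split dP (S := setT)); last by move=> p _; exact: cP.
by apply: eq_bigr => i _; rewrite setTI.
Qed.

Lemma tagged n P h (e : R) (t : nat -> Mt M) :
  disj_family n P -> cover n P ->
  (forall i, (i < n)%N -> forall p q, P i p -> P i q -> `|h p - h q| <= e) ->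
  (forall i, (exists p, P i p) -> P i (t i)) -> bnd h ->
  `|pos_integral mu h - \sum_(i < n) h (t i) * mu (P i)| <= e * mu setT.
Proof.
move=> dP cP osc ht [C hC].
have lo : exists lo, forall p, lo <= h p.
  by exists (- C) => p; have := hC p; rewrite ler_norml => /andP[].
have hi : exists hi, forall p, h p <= hi.
  by exists C => p; have := hC p; rewrite ler_norml => /andP[].
have up := I_le (b := fun i => h (t i) + e) dP cP _ lo.
have dn := I_ge (a := fun i => h (t i) - e) dP cP _ lo hi.
have E1 : \sum_(i < n) (h (t i) + e) * mu (P i) =
    \sum_(i < n) h (t i) * mu (P i) + e * mu setT.
  by rewrite -(mu_sumT dP cP) mulr_sumr -big_split; apply: eq_bigr => i _ /=; ring.
have E2 : \sum_(i < n) (h (t i) - e) * mu (P i) =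
    \sum_(i < n) h (t i) * mu (P i) - e * mu setT.
  rewrite -(mu_sumT dP cP) mulr_sumr -sumrB; apply: eq_bigr => i _ /=; ring.
have U : pos_integral mu h <= \sum_(i < n) (h (t i) + e) * mu (P i).
  apply: up => i ilt p Pp.
  have := osc i ilt p (t i) Pp (ht i (ex_intro _ p Pp)).
  rewrite ler_norml => /andP[]; lra.
have D : \sum_(i < n) (h (t i) - e) * mu (P i) <= pos_integral mu h.
  apply: dn => i ilt p Pp.
  have := osc i ilt p (t i) Pp (ht i (ex_intro _ p Pp)).
  rewrite ler_norml => /andP[]; lra.
rewrite E1 in U; rewrite E2 in D.
rewrite ler_norml; apply/andP; split; lra.
Qed.

Lemma decode (a b c d N : nat) : (b < N)%N -> (d < N)%N ->
  (a * N + b = c * N + d)%N -> a = c /\ b = d.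
Proof.
move=> bN dN e.
have bd : b = d.
  have := congr1 (modn ^~ N) e; rewrite /= !modnMDl !modn_small //.
split => //; subst d; move/addIn: e => e.
have N0 : (0 < N)%N by apply: leq_ltn_trans bN.
by apply/eqP; rewrite -(eqn_pmul2r N0) e.
Qed.

Lemma trunc_close (x y : R) : 0 <= x -> 0 <= y -> Num.truncn x = Num.truncn y ->
  -1 < x - y < 1.
Proof.
move=> x0 y0 e; have := truncn_itv x0; have := truncn_itv y0; rewrite e.
move=> /andP[a b] /andP[c d]; move: a b c d.
rewrite -natr1 => a b c d.
apply/andP; split; lra.
Qed.

Lemma fine (h1 h2 : Mt M -> R) (e : R) : bnd h1 -> bnd h2 -> 0 < e ->
  exists n P, disj_family n P /\ cover n P /\
    forall i, (i < n)%N -> forall p q, P i p -> P i q ->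
      `|h1 p - h1 q| <= e /\ `|h2 p - h2 q| <= e.
Proof.
move=> [C1 hC1] [C2 hC2] e0.
pose C := `|C1| + `|C2|.
have hC : forall h : Mt M -> R, (forall p, `|h p| <= C1) \/ (forall p, `|h p| <= C2) ->
    forall p, - C <= h p <= C.
  move=> h [] hh p; have := hh p; rewrite ler_norml => /andP[a b];
    have n1 := normr_ge0 C1; have n2 := normr_ge0 C2; have l1 := ler_norm C1;
    have l2 := ler_norm C2; rewrite /C; apply/andP; split; lra.
pose N := (Num.truncn (2 * C / e)).+1.
pose k (h : Mt M -> R) p := Num.truncn ((h p + C) / e).
have kN : forall h : Mt M -> R, (forall p, - C <= h p <= C) -> forall p, (k h p < N)%N.
  move=> h hh p; rewrite /k /N ltnS; apply: le_truncn.
  apply: ler_wpM2r; first by rewrite invr_ge0 ltW.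
  by have := hh p; move=> /andP[]; lra.
have k0 : forall h : Mt M -> R, (forall p, - C <= h p <= C) -> forall p, 0 <= (h p + C) / e.
  move=> h hh p; apply: divr_ge0; last exact: ltW.
  by have := hh p; move=> /andP[]; lra.
have b1 := hC h1 (or_introl hC1); have b2 := hC h2 (or_intror hC2).
pose kap p := (k h1 p * N + k h2 p)%N.
exists (N * N)%N, (fun i => [set p | kap p = i]); split; last split.
- move=> i j _ _ ij; apply/seteqP; split => // p [/= a b]; apply: ij; by rewrite -a -b.
- move=> p; exists (kap p); split => //.
  have := kN _ b1 p; have := kN _ b2 p; rewrite /kap; nia.
- move=> i _ p q /= Pp Pq.
  have [e1 e2] := decode (kN _ b2 p) (kN _ b2 q) (etrans Pp (esym Pq)).
  have osc : forall h : Mt M -> R, (forall p, - C <= h p <= C) -> k h p = k h q -> `|h p - h q| <= e.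
    move=> h hh ek; have := trunc_close (k0 _ hh p) (k0 _ hh q) ek.
    set a := (h p + C) / e; set b := (h q + C) / e.
    have ea : h p = a * e - C by rewrite /a; field; lra.
    have eb : h q = b * e - C by rewrite /b; field; lra.
    move=> /andP[l u]; rewrite ea eb ler_norml; apply/andP; split; nra.
  by split; apply: osc.
Qed.

Lemma zero_small (x K : R) : 0 <= K -> (forall e, 0 < e -> `|x| <= K * e) -> x = 0.
Proof.
move=> K0 h; apply/eqP; rewrite -normr_le0; apply: eps_le => e e0.
have K1 : 0 < K + 1 by lra.
have := h (e / (K + 1)); rewrite divr_gt0 // => /(_ isT) hx.
rewrite add0r; apply: le_trans hx _.
rewrite mulrA ler_pdivrMr //; nra.
Qed.

Lemma I_bound h C : (forall p, `|h p| <= C) -> `|pos_integral mu h| <= C * mu setT.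
Proof.
move=> hC.
have hu : forall p, h p <= C by move=> p; have := hC p; rewrite ler_norml => /andP[].
have hl : forall p, - C <= h p by move=> p; have := hC p; rewrite ler_norml => /andP[].
have U := I_le (b := fun _ => C) triv_disj triv_cover (fun i _ p _ => hu p) (ex_intro _ _ hl).
have D := I_ge (a := fun _ => - C) triv_disj triv_cover (fun i _ p _ => hl p)
   (ex_intro _ _ hl) (ex_intro _ _ hu).
rewrite !big_ord1 /triv in U D.
rewrite ler_norml; apply/andP; split; lra.
Qed.

Lemma I_lin (t0 : Mt M) h1 h2 (a : R) : bnd h1 -> bnd h2 ->
  pos_integral mu (fun p => a * h1 p + h2 p) =
  a * pos_integral mu h1 + pos_integral mu h2.
Proof.
move=> b1 b2; apply/eqP; rewrite -subr_eq0; apply/eqP.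
have mT0 := pos setT.
apply: (@zero_small _ ((`|a| * 2 + 2) * mu setT)).
  by apply: mulr_ge0 => //; have := normr_ge0 a; lra.
move=> e e0.
have [n [P [dP [cP osc]]]] := fine b1 b2 e0.
have [t ht] := tags t0 P.
have bc : bnd (fun p => a * h1 p + h2 p).
  case: b1 b2 => [C1 hC1] [C2 hC2]; exists (`|a| * C1 + C2) => p.
  apply: le_trans (ler_normD _ _) _; rewrite normrM.
  by apply: lerD => //; apply: ler_wpM2l.
have Tc := tagged (h := fun p => a * h1 p + h2 p) (e := (`|a| + 1) * e) (t := t) dP cP _ ht bc.
have T1 := tagged (h := h1) (e := e) (t := t) dP cP _ ht b1.
have T2 := tagged (h := h2) (e := e) (t := t) dP cP _ ht b2.
have Tc' : `|pos_integral mu (fun p => a * h1 p + h2 p) -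
   (a * \sum_(i < n) h1 (t i) * mu (P i) + \sum_(i < n) h2 (t i) * mu (P i))|
   <= (`|a| + 1) * e * mu setT.
  have -> : a * \sum_(i < n) h1 (t i) * mu (P i) + \sum_(i < n) h2 (t i) * mu (P i)
     = \sum_(i < n) (a * h1 (t i) + h2 (t i)) * mu (P i).
    by rewrite mulr_sumr -big_split; apply: eq_bigr => i _ /=; ring.
  apply: Tc => i ilt p q Pp Pq.
  have [o1 o2] := osc i ilt p q Pp Pq.
  have -> : a * h1 p + h2 p - (a * h1 q + h2 q) = a * (h1 p - h1 q) + (h2 p - h2 q) by ring.
  apply: le_trans (ler_normD _ _) _; rewrite normrM mulrDl mul1r.
  by apply: lerD => //; apply: ler_wpM2l.
have T1' : `|a * (pos_integral mu h1 - \sum_(i < n) h1 (t i) * mu (P i))| <=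
    `|a| * (e * mu setT).
  rewrite normrM; apply: ler_wpM2l => //; apply: T1 => i ilt p q Pp Pq.
  by have [] := osc i ilt p q Pp Pq.
have {}T2 : `|pos_integral mu h2 - \sum_(i < n) h2 (t i) * mu (P i)| <= e * mu setT.
  apply: T2 => i ilt p q Pp Pq; by have [] := osc i ilt p q Pp Pq.
move: Tc' T1' T2.
set X := pos_integral mu _; set I1 := pos_integral mu h1; set I2 := pos_integral mu h2.
set S1 := \sum_(i < n) _; set S2 := \sum_(i < n) _.
rewrite !ler_norml => /andP[c1 c2] /andP[d1 d2] /andP[f1 f2].
apply/andP; split.
  have : -((`|a| * 2 + 2) * mu setT * e) <= - ((`|a| + 1) * e * mu setT) - `|a| * (e * mu setT) - e * mu setT.
    apply: eqle; ring.
  move: c1 d2 f2; set A := a * (I1 - S1); have -> : A = a * I1 - a * S1 by rewrite /A; ring.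
  move=> *; lra.
have : ((`|a| + 1) * e * mu setT) + `|a| * (e * mu setT) + e * mu setT <= (`|a| * 2 + 2) * mu setT * e.
  apply: eqle; ring.
move: c2 d1 f1; set A := a * (I1 - S1); have -> : A = a * I1 - a * S1 by rewrite /A; ring.
move=> *; lra.
Qed.

End Integ.


Section Lip.
Variables (R : realType) (M : Type) (d : M -> M -> R) (z : M).
Hypothesis hd : is_metric d.

Lemma d_ge0 x y : 0 <= d x y. Proof. by case: hd. Qed.
Lemma d_sym x y : d x y = d y x. Proof. by case: hd => _ [_ []]. Qed.
Lemma d_tri x y w : d x w <= d x y + d y w. Proof. by case: hd => _ [_ [_]]. Qed.
Lemma d_xx x : d x x = 0. Proof. by case: hd => _ [h _]; apply/h. Qed.
Lemma d_gt0 x y : x <> y -> 0 < d x y.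
Proof.
move=> xy; rewrite lt_neqAle d_ge0 andbT; apply/eqP => e.
by case: hd => _ [h _]; apply: xy; apply/h.
Qed.

Lemma lipnorm_ge0 f : 0 <= lipnorm d f.
Proof.
rewrite /lipnorm; set E := [set r | _].
have [hs|nhs] := pselect (has_sup E); last by rewrite sup_out.
have [r Er] := hs.1.
apply: (@le_trans _ _ r); last exact: sup_upper_bound.
case: Er => x [y [xy ->]]; apply: divr_ge0 => //; exact: d_ge0.
Qed.

Lemma lip_ratio f x y : lipschitz d f -> x <> y ->
  `|f x - f y| / d x y <= lipnorm d f.
Proof.
move=> [L hL] xy; apply: (sup_ub_of (B := L)); last by exists x, y.
move=> r [a [b [ab ->]]]; rewrite ler_pdivrMr; last exact: d_gt0.
exact: hL.
Qed.

Lemma lip_bound f c x y : lipschitz d f -> lipnorm d f <= c ->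
  `|f x - f y| <= c * d x y.
Proof.
move=> lf lc; have [->|xy] := pselect (x = y).
  by rewrite subrr normr0 d_xx mulr0.
have := le_trans (lip_ratio lf xy) lc.
by rewrite ler_pdivrMr //; exact: d_gt0.
Qed.

Lemma lipnorm_le f c : 0 <= c -> (forall x y, `|f x - f y| <= c * d x y) ->
  lipnorm d f <= c.
Proof.
move=> c0 h; apply: sup_le_of => // r [x [y [xy ->]]].
by rewrite ler_pdivrMr //; exact: d_gt0.
Qed.

Lemma lipschitzL f g (a : R) : lipschitz d f -> lipschitz d g ->
  lipschitz d (fun x => a * f x + g x).
Proof.
move=> [L1 h1] [L2 h2]; exists (`|a| * `|L1| + `|L2|) => x y.
have -> : a * f x + g x - (a * f y + g y) = a * (f x - f y) + (g x - g y) by ring.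
apply: le_trans (ler_normD _ _) _; rewrite normrM mulrDl.
have dxy := d_ge0 x y.
apply: lerD.
  rewrite -mulrA; apply: ler_wpM2l => //; apply: le_trans (h1 x y) _.
  by apply: ler_wpM2r => //; exact: ler_norm.
by apply: le_trans (h2 x y) _; apply: ler_wpM2r => //; exact: ler_norm.
Qed.

Lemma Lip0L f g (a : R) : Lip0 d z f -> Lip0 d z g -> Lip0 d z (fun x => a * f x + g x).
Proof. by move=> [lf f0] [lg g0]; split; [exact: lipschitzL|rewrite f0 g0; ring]. Qed.

Lemma deLeeuw_bound f p : lipschitz d f -> `|deLeeuw d f p| <= lipnorm d f.
Proof.
move=> lf; case: p => [[x y] xy] /=; rewrite /deLeeuw /=.
by rewrite normrM (ger0_norm (x := (d x y)^-1)) ?invr_ge0 ?d_ge0 //; exact: (lip_ratio lf xy).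
Qed.

Lemma deLeeuw_bnd f : lipschitz d f -> bnd (deLeeuw d f).
Proof. by move=> lf; exists (lipnorm d f) => p; exact: deLeeuw_bound. Qed.

Lemma deLeeuwL f g (a : R) :
  deLeeuw d (fun x => a * f x + g x) = fun p => a * deLeeuw d f p + deLeeuw d g p.
Proof.
apply/funext => -[[x y] xy]; rewrite /deLeeuw /=.
by rewrite /=; ring.
Qed.

Lemma cyc_tele (a : nat -> R) n : (0 < n)%N ->
  \sum_(i < n) (a i - a ((i.+1) %% n)%N) = 0.
Proof.
case: n => [//|m] _; rewrite sumrB.
have e2 : \sum_(i < m.+1) a ((i.+1) %% m.+1)%N = \sum_(i < m) a i.+1 + a 0%N.
  rewrite big_ord_recr /= modnn; congr (_ + _).
  by apply: eq_bigr => i _; rewrite modn_small // ltnS.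
have e1 : \sum_(i < m.+1) a i = a 0%N + \sum_(i < m) a i.+1 by rewrite big_ord_recl.
rewrite e1 e2; ring.
Qed.

Lemma cm_of_fun (gamma : R) (B : set (M * M)) (F : M -> R) :
  (forall x y, F x - F y <= d x y) ->
  (forall q, B q -> gamma * d q.1 q.2 <= F q.1 - F q.2) -> cyc_monotone d gamma B.
Proof.
move=> hF hB n s n0 sB.
apply: (@le_trans _ _ (\sum_(i < n) (F (s i).2 - F (s ((i.+1) %% n)%N).2))).
  by rewrite (cyc_tele (fun i => F (s i).2) n0).
apply: ler_sum => i _; rewrite le_min; apply/andP; split; last exact: hF.
have := hB _ (sB i (ltn_ord i)); have := hF (s i).1 (s ((i.+1) %% n)%N).2; lra.
Qed.

Section FunOfCM.
Variables (gamma : R) (B : set (M * M)) (b0 : M * M).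
Hypotheses (Bb0 : B b0) (cmB : cyc_monotone d gamma B).

Let w (q q' : M * M) := Num.min (d q.1 q'.2 - gamma * d q.1 q.2) (d q.2 q'.2).
Let adm k (s : nat -> M * M) := (forall i, (i <= k)%N -> B (s i)) /\ s k = b0.
Let pval x k s := d x (s 0%N).2 + \sum_(i < k) w (s i) (s i.+1).
Let PV x := [set v | exists k s, adm k s /\ v = pval x k s].
Let G x := inf (PV x).

Lemma pval_lb x k s : adm k s -> - d x b0.2 <= pval x k s.
Proof.
move=> [sB sk].
have := cmB (n := k.+1) (s := s) (ltn0Sn k) (fun i ilt => sB i ilt).
rewrite big_ord_recr /= modnn.
have -> : \sum_(i < k) Num.min (d (s i).1 (s ((i.+1) %% k.+1)%N).2 - gamma * d (s i).1 (s i).2)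
   (d (s i).2 (s ((i.+1) %% k.+1)%N).2) = \sum_(i < k) w (s i) (s i.+1).
  by apply: eq_bigr => i _; rewrite modn_small // ltnS.
rewrite sk => h.
have : w b0 (s 0%N) <= d b0.2 (s 0%N).2 by rewrite /w ge_min lexx orbT.
have := d_tri b0.2 x (s 0%N).2; rewrite (d_sym b0.2 x) /pval.
move: h; rewrite /w; lra.
Qed.

Lemma PV_ne x : PV x (pval x 0 (fun _ => b0)).
Proof. by exists 0%N, (fun _ => b0); split => //; split. Qed.

Lemma PV_lb x : has_lbound (PV x).
Proof. by exists (- d x b0.2) => _ [k [s [a ->]]]; exact: pval_lb. Qed.

Lemma G_lip x y : G x - G y <= d x y.
Proof.
suff : G x - d x y <= G y by lra.
apply: lb_le_inf; first by eexists; exact: PV_ne.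
move=> _ [k [s [a ->]]].
have : G x <= pval x k s by apply: (ge_inf (PV_lb x)); exists k, s.
rewrite /pval; have := d_tri x y (s 0%N).2; lra.
Qed.

Lemma G_key q : B q -> G q.2 + gamma * d q.1 q.2 <= G q.1.
Proof.
move=> Bq.
suff : G q.2 <= G q.1 - gamma * d q.1 q.2 by lra.
have h : forall v, PV q.1 v -> G q.2 <= v - gamma * d q.1 q.2.
  move=> _ [k [s [[sB sk] ->]]].
  pose s' := fun i => if i is j.+1 then s j else q.
  have a' : adm k.+1 s'.
    by split => // -[|i] //= ilt; apply: sB.
  apply: (@le_trans _ _ (pval q.2 k.+1 s')).
    by apply: (ge_inf (PV_lb q.2)); exists k.+1, s'.
  rewrite /pval big_ord_recl /= d_xx add0r.
  have -> : \sum_(i < k) w (s' (bump 0 i)) (s' (bump 0 i).+1) = \sum_(i < k) w (s i) (s i.+1).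
    by apply: eq_bigr.
  have : w q (s 0%N) <= d q.1 (s 0%N).2 - gamma * d q.1 q.2 by rewrite /w ge_min lexx.
  lra.
suff : G q.2 + gamma * d q.1 q.2 <= G q.1 by lra.
apply: lb_le_inf; first by eexists; exact: PV_ne.
move=> v Pv; have := h v Pv; lra.
Qed.

Lemma fun_of_cm : exists F : M -> R,
  [/\ forall x y, `|F x - F y| <= d x y,
      forall q, B q -> gamma * d q.1 q.2 <= F q.1 - F q.2 & F z = 0].
Proof.
exists (fun x => G x - G z); split.
- move=> x y; rewrite ler_norml; have := G_lip x y; have := G_lip y x.
  rewrite d_sym; move=> *; apply/andP; split; lra.
- move=> q Bq; have := G_key Bq; lra.
- by rewrite subrr.
Qed.
End FunOfCM.
End Lip.


Section Dir1.
Variables (R : realType) (M : Type) (d : M -> M -> R) (z : M).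
Hypothesis hd : is_metric d.

Definition P2 (B : set (Mt M)) : nat -> set (Mt M) := fun i => if i == 0%N then B else ~` B.
Lemma P2_disj B : disj_family 2 (P2 B).
Proof.
move=> [|[|i]] [|[|j]] // _ _ _; apply/seteqP; split => // p [] //=.
Qed.
Lemma P2_cover B : cover 2 (P2 B).
Proof. move=> p; have [Bp|nBp] := pselect (B p); [by exists 0%N|by exists 1%N]. Qed.

Lemma dir1 : LD2P d z ->
  (forall mu : set (Mt M) -> R, optimal d z mu -> totvar mu = 1 ->
   forall gamma : R, 0 < gamma < 1 ->
   exists (A : set (Mt M)) (u v : M),
     u <> v /\ gamma <= mu A /\
     cyc_monotone d gamma ((@proj1_sig _ _) @` A `|` [set (u, v)]) /\
     cyc_monotone d gamma ((@proj1_sig _ _) @` A `|` [set (v, u)])).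
Proof.
move=> ld2p mu [[fa [C hC]] [pos dn]] tv gamma /andP[g0 g1].
have mu0' := mu0 fa.
have [t0 _] : exists t0 : Mt M, True.
  apply: contrapT => ne.
  have : totvar mu <= 0.
    apply: sup_le_of => // r [n [A [dA ->]]].
    rewrite big1 // => i _.
    have -> : A i = set0 by apply/seteqP; split => // p _; apply: ne; exists p.
    by rewrite mu0' normr0.
  by rewrite tv; lra.
have muT1 : mu setT <= 1.
  rewrite -tv; apply: le_trans (ler_norm _) _.
  apply: (sup_ub_of (B := C)); first by move=> r [n [A [dA ->]]]; exact: hC.
  exists 1%N, (@triv M); split; first exact: triv_disj.
  by rewrite big_ord1.
have isd : is_dual d z (Phistar d mu).
  split.
    move=> a f g [lf _] [lg _]; rewrite /Phistar deLeeuwL.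
    exact: I_lin fa pos t0 _ _ _ (deLeeuw_bnd hd lf) (deLeeuw_bnd hd lg).
  exists (mu setT) => f [lf _]; rewrite mulrC /Phistar.
  apply: (I_bound fa pos) => p; exact: deLeeuw_bound.
have dn1 : dualnorm d z (Phistar d mu) = 1 by rewrite dn tv.
pose del := 1 - gamma.
have del0 : 0 < del by rewrite /del; lra.
pose alpha := del * del / 4.
have a0 : 0 < alpha by rewrite /alpha; apply: divr_gt0 => //; apply: mulr_gt0.
have diam := ld2p _ isd dn1 alpha a0.
have sl_bd : forall f, slice d z (Phistar d mu) alpha f -> lipschitz d f /\ lipnorm d f <= 1 /\ f z = 0.
  by move=> f [[[lf f0] n1] _].
have diamB : forall r, (fun r => exists f g, slice d z (Phistar d mu) alpha f /\
     slice d z (Phistar d mu) alpha g /\ r = lipnorm d (fun x => f x - g x)) r -> r <= 2.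
  move=> r [f [g [sf [sg ->]]]].
  have [lf [nf _]] := sl_bd f sf; have [lg [ng _]] := sl_bd g sg.
  apply: lipnorm_le => // x y.
  have := lip_bound hd x y lf nf; have := lip_bound hd x y lg ng.
  have -> : f x - g x - (f y - g y) = (f x - f y) - (g x - g y) by ring.
  move=> h1 h2; apply: le_trans (ler_normB _ _) _; lra.
pose DE := [set r | exists f g, slice d z (Phistar d mu) alpha f /\
     slice d z (Phistar d mu) alpha g /\ r = lipnorm d (fun x => f x - g x)].
have diam' : sup DE = 2 := diam.
have [r [f [g [sf [sg ->]]]] hr] : exists2 r, DE r & 1 + gamma < r.
  apply: sup_gt_ex diamB _ _.
    apply: contrapT => ne; move: diam'.
    have -> : DE = set0.
      by apply/seteqP; split => // r hr; apply: ne; exists r.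
    by rewrite sup0 => /esym/eqP; rewrite pnatr_eq0.
  by rewrite diam'; lra.
have [lf [nf f0]] := sl_bd f sf; have [lg [ng g0']] := sl_bd g sg.
have lfg : lipschitz d (fun x => f x - g x).
  have := lipschitzL hd (-1) lg lf; have -> : (fun x => -1 * g x + f x) = (fun x => f x - g x).
    by apply/funext => x; ring.
  by [].
pose LE := [set r | exists x y, x <> y /\
     r = `|(fun x => f x - g x) x - (fun x => f x - g x) y| / d x y].
have LEb : forall r, LE r -> r <= lipnorm d (fun x => f x - g x).
  move=> r0 [x [y [xy ->]]]; exact (lip_ratio hd lfg xy).
have hr' : 1 + gamma < sup LE := hr.
have LEne : LE !=set0.
  apply: contrapT => ne; move: hr'.
  have -> : LE = set0.
    by apply/seteqP; split => // r0 hr0; apply: ne; exists r0.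
  by rewrite sup0; lra.
have [x [y [xy hxy]]] : exists x y, x <> y /\ 1 + gamma < `|f x - g x - (f y - g y)| / d x y.
  by have [_ [x [y [xy ->]]] h] := sup_gt_ex LEb LEne hr'; exists x, y.
have [u [v [uv huv]]] : exists u v, u <> v /\ (1 + gamma) * d u v < (f u - g u) - (f v - g v).
  have dxy := d_gt0 hd xy; move: hxy; rewrite ltr_pdivlMr //.
  have [sg0|sg0] := lerP 0 (f x - g x - (f y - g y)).
    by rewrite ger0_norm // => h; exists x, y.
  rewrite ltr0_norm // => h; exists y, x; split; first by move=> e; apply: xy; rewrite e.
  by rewrite (d_sym hd y x); lra.
have fl : forall a b, `|f a - f b| <= d a b.
  by move=> a b; have := lip_bound hd a b lf nf; rewrite mul1r.
have gl : forall a b, `|g a - g b| <= d a b.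
  by move=> a b; have := lip_bound hd a b lg ng; rewrite mul1r.
have fuv : gamma * d u v <= f u - f v.
  have := fl u v; have := gl u v; rewrite !ler_norml => /andP[? ?] /andP[? ?]; lra.
have gvu : gamma * d u v <= g v - g u.
  have := fl u v; have := gl u v; rewrite !ler_norml => /andP[? ?] /andP[? ?]; lra.
pose A := [set p : Mt M | gamma <= deLeeuw d f p /\ gamma <= deLeeuw d g p].
exists A, u, v; split => //; split; last split.
-
  have est : forall h : Mt M -> R, (forall p, `|h p| <= 1) -> 1 - alpha < pos_integral mu h ->
      del * mu [set p | h p < gamma] < alpha /\ 1 - alpha < mu setT.
    move=> h h1 hI; set B := [set p | h p < gamma].
    have U := I_le fa pos (b := fun i => if i == 0%N then gamma else 1) (P2_disj B) (P2_cover B).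
    have := U h; rewrite big_ord_recl big_ord1 /=.
    move=> {}U.
    have {}U : pos_integral mu h <= gamma * mu B + 1 * mu (~` B).
      apply: U; last by exists (-1) => p; have := h1 p; rewrite ler_norml => /andP[].
      move=> [|[|i]] // _ p /=.
        by move=> /ltW.
      by move=> _; have := h1 p; rewrite ler_norml => /andP[].
    have eT : mu setT = mu B + mu (~` B) by rewrite (mu_sep fa setT B) !setTI.
    have gm : gamma * mu B <= mu B.
      by rewrite -[leRHS]mul1r; apply: ler_wpM2r; [exact: pos|lra].
    have := pos B; have := pos (~` B); rewrite /del; split; lra.
  have h1f : forall p, `|deLeeuw d f p| <= 1.
    by move=> p; apply: le_trans (deLeeuw_bound hd p lf) nf.
  have h1g : forall p, `|deLeeuw d g p| <= 1.
    by move=> p; apply: le_trans (deLeeuw_bound hd p lg) ng.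
  have [ef eT] := est _ h1f sf.2.
  have [eg _] := est _ h1g sg.2.
  set Bf := [set p | deLeeuw d f p < gamma] in ef.
  set Bg := [set p | deLeeuw d g p < gamma] in eg.
  have sub : ~` A `<=` Bf `|` Bg.
    move=> p nA; rewrite /Bf /Bg /=.
    have [a1|a1] := ltP (deLeeuw d f p) gamma; first by left.
    have [a2|a2] := ltP (deLeeuw d g p) gamma; first by right.
    by exfalso; apply: nA.
  have mU : mu (Bf `|` Bg) <= mu Bf + mu Bg.
    have -> : Bf `|` Bg = Bf `|` (Bg `&` ~` Bf).
      apply/seteqP; split => p.
        by case=> [h|h]; [left|have [?|?] := pselect (Bf p); [left|right]].
      by case=> [h|[h _]]; [left|right].
    rewrite fa; last by apply/seteqP; split => // p [? [_ ?]].
    have := mu_mono fa pos (S := Bg `&` ~` Bf) (S' := Bg) (fun p (hp : (Bg `&` ~` Bf) p) => proj1 hp); lra.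
  have mA : mu A = mu setT - mu (~` A) by rewrite (mu_sep fa setT A) !setTI; ring.
  have mnA := mu_mono fa pos sub.
  have lf4 : forall m, 0 <= m -> del * m < alpha -> m < del / 4.
    move=> m m0 hm; rewrite ltNge; apply/negP => hge.
    have := ler_wpM2l (ltW del0) hge; move: hm; rewrite /alpha; lra.
  have := lf4 _ (pos Bf) ef; have := lf4 _ (pos Bg) eg.
  move: eT; rewrite /alpha /del => *.
  have : 0 <= (1 - gamma) * (1 - gamma) <= (1 - gamma) by apply/andP; split; nra.
  move=> /andP[? ?]; lra.
- apply: (cm_of_fun (F := f)).
    by move=> a b; have := fl a b; rewrite ler_norml => /andP[].
  move=> q [[[[a b] ab] [hA _] <-]|->] /=.
    move: hA; rewrite /deLeeuw /= ler_pdivlMr //; exact: d_gt0.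
  exact: fuv.
- apply: (cm_of_fun (F := g)).
    by move=> a b; have := gl a b; rewrite ler_norml => /andP[].
  move=> q [[[[a b] ab] [_ hA] <-]|->] /=.
    move: hA; rewrite /deLeeuw /= ler_pdivlMr //; exact: d_gt0.
  by rewrite (d_sym hd v u).
Qed.
End Dir1.


Section Dir2.
Variables (R : realType) (M : Type) (d : M -> M -> R) (z : M).
Hypothesis hd : is_metric d.
Variable phi : (M -> R) -> R.
Hypotheses (isd : is_dual d z phi) (dn : dualnorm d z phi = 1).

Let z0 : M -> R := fun _ => 0.
Lemma Lip0z : Lip0 d z z0.
Proof. by split => //; exists 0 => x y; rewrite /z0 subrr normr0 mul0r. Qed.

Lemma phi0 : phi z0 = 0.
Proof.
have := isd.1 1 z0 z0 Lip0z Lip0z.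
have -> : (fun x => 1 * z0 x + z0 x) = z0 by apply/funext => x; rewrite /z0; ring.
lra.
Qed.

Lemma phiZ f a : Lip0 d z f -> phi (fun x => a * f x) = a * phi f.
Proof.
move=> lf; have := isd.1 a f z0 lf Lip0z.
have -> : (fun x => a * f x + z0 x) = (fun x => a * f x) by apply/funext => x; rewrite /z0 addr0.
by rewrite phi0 addr0.
Qed.

Lemma ex_pt : exists t0 : Mt M, True.
Proof.
apply: contrapT => ne.
have allz : forall x, x = z.
  move=> x; apply: contrapT => xz; apply: ne.
  by exists (exist (fun p : M * M => p.1 <> p.2) (x, z) xz).
have : dualnorm d z phi <= 0.
  apply: sup_le_of => // r [f [[[lf f0] _] ->]].
  have -> : f = z0 by apply/funext => x; rewrite (allz x) f0.
  by rewrite phi0 normr0.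
by rewrite dn; lra.
Qed.

Lemma phi_ball f : unit_ball d z f -> `|phi f| <= 1.
Proof.
move=> uf; rewrite -dn; case: isd => _ [C hC].
apply: (sup_ub_of (B := `|C|)); last by exists f.
move=> r [g [[lg ng] ->]].
apply: le_trans (hC g lg) _.
have := lipnorm_ge0 hd g => g0.
apply: (@le_trans _ _ (`|C| * lipnorm d g)).
  by apply: ler_wpM2r => //; exact: ler_norm.
by rewrite -[leRHS]mulr1; apply: ler_wpM2l.
Qed.

Lemma phi_le f : Lip0 d z f -> phi f <= lipnorm d f.
Proof.
move=> lf; have L0 := lipnorm_ge0 hd f.
have [L00|Lp] := eqVneq (lipnorm d f) 0.
  have -> : f = z0.
    apply/funext => x; have := @lip_bound _ _ _ hd f (lipnorm d f) x z lf.1 (lexx _).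
    rewrite L00 mul0r lf.2 subr0 normr_le0 => /eqP ->; done.
  by rewrite phi0; exact: lipnorm_ge0.
have L1 : 0 < lipnorm d f by rewrite lt_neqAle eq_sym Lp.
set L := lipnorm d f in L0 L1 Lp *.
pose g := fun x => L^-1 * f x.
have ug : unit_ball d z g.
  have lg : Lip0 d z g.
    have := Lip0L hd (L^-1) lf Lip0z.
    by have -> : (fun x => L^-1 * f x + z0 x) = g by apply/funext => x; rewrite /z0 addr0.
  split => //; apply: lipnorm_le => // x y.
  rewrite /g -mulrBr normrM gtr0_norm ?invr_gt0 // mul1r.
  rewrite ler_pdivrMl //; exact: (@lip_bound _ _ _ hd f L x y lf.1 (lexx _)).
have := phi_ball ug; rewrite /g phiZ // normrM gtr0_norm ?invr_gt0 //.
rewrite ler_pdivrMl // mulr1 => h; apply: le_trans (ler_norm _) h.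
Qed.

Definition mkpt (x y : M) (h : x <> y) : Mt M := exist (fun p : M * M => p.1 <> p.2) (x, y) h.
Lemma neq_sym (x y : M) : x <> y -> y <> x. Proof. by move=> h e; apply: h. Qed.

Section WithPt.
Variable t0 : Mt M.

Definition pr (h : Mt M -> R) := sup [set h t | t in [set: Mt M]].

Lemma pr_ub h : bnd h -> forall t, h t <= pr h.
Proof.
move=> [C hC] t; apply: (sup_ub_of (B := C)); last by exists t.
by move=> _ [s _ <-]; have := hC s; rewrite ler_norml => /andP[].
Qed.

Lemma pr_le h B : (forall t, h t <= B) -> pr h <= B.
Proof.
move=> hB; apply: sup_le_ne; first by exists (h t0), t0.
by move=> _ [s _ <-].
Qed.

Lemma bnd_lin (a : R) (x y : Mt M -> R) : bnd x -> bnd y -> bnd (lin a x y).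
Proof.
move=> [C1 h1] [C2 h2]; exists (`|a| * C1 + C2) => t; rewrite /lin.
apply: le_trans (ler_normD _ _) _; rewrite normrM.
by apply: lerD => //; apply: ler_wpM2l.
Qed.

Lemma bnd_zf : bnd (@zf R (Mt M)).
Proof. by exists 0 => t; rewrite /zf normr0. Qed.

Lemma pr_sub (x y : Mt M -> R) : bnd x -> bnd y -> pr (lin 1 x y) <= pr x + pr y.
Proof.
move=> bx by_; apply: pr_le => t; rewrite /lin mul1r.
by apply: lerD; apply: pr_ub.
Qed.

Lemma pr_hom (a : R) (x : Mt M -> R) : 0 < a -> bnd x -> pr (lin a x (@zf R (Mt M))) = a * pr x.
Proof.
move=> a0 bx; apply/eqP; rewrite eq_le; apply/andP; split.
  apply: pr_le => t; rewrite /lin /zf addr0; apply: ler_wpM2l; [exact: ltW|exact: pr_ub].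
rewrite -ler_pdivlMl //; apply: pr_le => t.
rewrite ler_pdivlMl //; have := pr_ub (bnd_lin a bx bnd_zf) t.
by rewrite /lin /zf addr0.
Qed.

Definition G0 := [set q | exists f, Lip0 d z f /\ q = (deLeeuw d f, phi f)].

Lemma Lip0_eq f g : Lip0 d z f -> Lip0 d z g -> deLeeuw d f = deLeeuw d g -> f = g.
Proof.
move=> [_ f0] [_ g0] e; apply/funext => x.
have [->|xz] := pselect (x = z); first by rewrite f0 g0.
have := congr1 (fun h => h (exist (fun p : M * M => p.1 <> p.2) (x, z) xz)) e.
rewrite /deLeeuw /= f0 g0 !subr0 => h.
have dz := d_gt0 hd xz.
by apply: (mulIf (x := (d x z)^-1)); [rewrite invr_eq0 gt_eqF|].
Qed.

Lemma pr_ge0 f : Lip0 d z f -> 0 <= pr (deLeeuw d f).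
Proof.
move=> [lf _]; have b := deLeeuw_bnd hd lf.
case: t0 => [[x y] xy].
have := pr_ub b (mkpt xy); have := pr_ub b (mkpt (neq_sym xy)).
rewrite /deLeeuw /= (d_sym hd y x) => h1 h2.
have dxy := d_gt0 hd xy.
have : (f y - f x) / d x y = - ((f x - f y) / d x y) by rewrite -mulNr opprB.
lra.
Qed.

Lemma good_G0 : good (@bnd R M) pr G0.
Proof.
split.
- move=> x r r' [f [lf [= ex er]]] [g [lg [= ex' er']]].
  rewrite er er'; congr phi; apply: Lip0_eq => //; by rewrite -ex -ex'.
- move=> a x y r s [f [lf [= -> ->]]] [g [lg [= -> ->]]].
  exists (fun x => a * f x + g x); split; first exact: Lip0L.
  by congr pair; [rewrite deLeeuwL|rewrite (isd.1 a f g lf lg)].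
- move=> x r [f [lf [= -> ->]]].
  apply: le_trans (phi_le lf) _.
  apply: lipnorm_le => //; first exact: pr_ge0.
  move=> a b; have [->|ab] := pselect (a = b).
    by rewrite subrr normr0; apply: mulr_ge0; [exact: pr_ge0|exact: d_ge0].
  have b1 := pr_ub (deLeeuw_bnd hd lf.1) (mkpt ab).
  have b2 := pr_ub (deLeeuw_bnd hd lf.1) (mkpt (neq_sym ab)).
  move: b1 b2; rewrite /deLeeuw /= (d_sym hd b a) => b1 b2.
  have dab := d_gt0 hd ab.
  rewrite ler_pdivrMr // in b2; rewrite ler_pdivrMr // in b1.
  rewrite ler_norml; apply/andP; split; lra.
- move=> x r [f [lf [= -> _]]]; exact (deLeeuw_bnd hd lf.1).
Qed.

Lemma G0_zf : G0 (@zf R (Mt M), 0).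
Proof.
exists z0; split; first exact: Lip0z.
congr pair; last by rewrite phi0.
by apply/funext => p; rewrite /deLeeuw /z0 /zf subrr mul0r.
Qed.

Lemma ex_Lambda : exists L : (Mt M -> R) -> R,
  [/\ forall a x y, bnd x -> bnd y -> L (lin a x y) = a * L x + L y,
      forall x, bnd x -> L x <= pr x &
      forall f, Lip0 d z f -> L (deLeeuw d f) = phi f].
Proof.
have [L [h1 h2 h3]] := hahn_banach bnd_lin pr_sub pr_hom good_G0 G0_zf.
exists L; split => // f lf; apply: h3; by exists f.
Qed.

Variable L : (Mt M -> R) -> R.
Hypotheses (Llin : forall a x y, bnd x -> bnd y -> L (lin a x y) = a * L x + L y)
  (Lle : forall x, bnd x -> L x <= pr x)
  (Lext : forall f, Lip0 d z f -> L (deLeeuw d f) = phi f).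

Lemma L_zf : L (@zf R (Mt M)) = 0.
Proof.
have := Llin 1 bnd_zf bnd_zf.
have -> : lin 1 (@zf R (Mt M)) (@zf R (Mt M)) = @zf R (Mt M).
  by apply/funext => t; rewrite /lin /zf; ring.
lra.
Qed.

Lemma L_pos h : bnd h -> (forall t, 0 <= h t) -> 0 <= L h.
Proof.
move=> bh h0.
have := Lle (bnd_lin (-1) bh bnd_zf); rewrite Llin //; last exact: bnd_zf.
rewrite L_zf addr0 => h1.
have : pr (lin (-1) h (@zf R (Mt M))) <= 0.
  by apply: pr_le => t; rewrite /lin /zf; have := h0 t; lra.
lra.
Qed.

Lemma L_mono h k : bnd h -> bnd k -> (forall t, h t <= k t) -> L h <= L k.
Proof.
move=> bh bk hk.
have : 0 <= L (lin (-1) h k).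
  by apply: L_pos; [exact: bnd_lin|move=> t; rewrite /lin; have := hk t; lra].
rewrite Llin //; lra.
Qed.

Definition one : Mt M -> R := fun _ => 1.
Lemma bnd_one : bnd one. Proof. by exists 1 => t; rewrite /one normr1. Qed.

Lemma L_one : L one = 1.
Proof.
have u : L one <= 1 by apply: le_trans (Lle bnd_one) _; apply: pr_le => t; rewrite /one.
have := Lle (bnd_lin (-1) bnd_one bnd_zf); rewrite Llin; [|exact: bnd_one|exact: bnd_zf].
rewrite L_zf addr0 => h1.
have : pr (lin (-1) one (@zf R (Mt M))) <= -1.
  by apply: pr_le => t; rewrite /lin /zf /one; lra.
lra.
Qed.

Definition ind (A : set (Mt M)) : Mt M -> R := fun t => if pselect (A t) then 1 else 0.
Lemma bnd_ind A : bnd (ind A).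
Proof. by exists 1 => t; rewrite /ind; case: pselect => ?; rewrite ?normr1 ?normr0. Qed.
Lemma ind_ge0 A t : 0 <= ind A t. Proof. by rewrite /ind; case: pselect. Qed.

Definition muL (A : set (Mt M)) := L (ind A).

Lemma indT A t : A t -> ind A t = 1.
Proof. by rewrite /ind; case: pselect. Qed.
Lemma indF A t : ~ A t -> ind A t = 0.
Proof. by rewrite /ind; case: pselect. Qed.

Lemma muL_fa : fin_additive muL.
Proof.
move=> A B AB; rewrite /muL -[L (ind A)]mul1r -Llin; try exact: bnd_ind.
congr L; apply/funext => t; rewrite /lin mul1r.
have [At|nAt] := pselect (A t); have [Bt|nBt] := pselect (B t).
- by exfalso; have /seteqP[h _] := AB; exact: h t (conj At Bt).
- rewrite (@indT (A `|` B)); last by left.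
  by rewrite (@indT A) // (@indF B) // addr0.
- rewrite (@indT (A `|` B)); last by right.
  by rewrite (@indF A) // (@indT B) // add0r.
- rewrite (@indF (A `|` B)); last by case.
  by rewrite (@indF A) // (@indF B) // addr0.
Qed.

Lemma muL_pos : positive_measure muL.
Proof. by move=> A; apply: L_pos; [exact: bnd_ind|exact: ind_ge0]. Qed.

Lemma muL_T : muL setT = 1.
Proof.
rewrite /muL -L_one; congr L; apply/funext => t; by rewrite /one indT.
Qed.

Lemma bnd_sum n (c : nat -> R) (P : nat -> set (Mt M)) :
  bnd (fun t => \sum_(i < n) c i * ind (P i) t).
Proof.
exists (\sum_(i < n) `|c i|) => t; apply: le_trans (ler_norm_sum _ _ _) _.
apply: ler_sum => i _; rewrite normrM -[leRHS]mulr1; apply: ler_wpM2l => //.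
by rewrite /ind; case: pselect => ?; rewrite ?normr1 ?normr0.
Qed.

Lemma L_sum n (c : nat -> R) (P : nat -> set (Mt M)) :
  L (fun t => \sum_(i < n) c i * ind (P i) t) = \sum_(i < n) c i * muL (P i).
Proof.
elim: n => [|n IH].
  rewrite big_ord0; transitivity (L (@zf R (Mt M))); last exact: L_zf.
  by congr L; apply/funext => t; rewrite big_ord0.
rewrite big_ord_recr /= -IH.
have -> : (fun t => \sum_(i < n.+1) c i * ind (P i) t) =
   lin (c n) (ind (P n)) (fun t => \sum_(i < n) c i * ind (P i) t).
  by apply/funext => t; rewrite big_ord_recr /= /lin addrC.
rewrite Llin; [by rewrite addrC|exact: bnd_ind|exact: bnd_sum].
Qed.

Lemma L_I h : bnd h -> pos_integral muL h = L h.
Proof.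
move=> bh; apply/eqP; rewrite -subr_eq0; apply/eqP.
apply: (@zero_small _ _ 2); first lra.
move=> e e0.
have [n [P [dP [cP osc]]]] := fine bh bh e0.
have [t ht] := tags t0 P.
have T := tagged muL_fa muL_pos (t := t) dP cP (fun i ilt p q Pp Pq => (osc i ilt p q Pp Pq).1) ht bh.
rewrite muL_T mulr1 in T.
set S := \sum_(i < n) h (t i) * muL (P i) in T.
pose k := fun p => \sum_(i < n) h (t i) * ind (P i) p.
have LS : L k = S by exact: (L_sum n (fun i => h (t i)) P).
have close : forall p, `|h p - k p| <= e.
  move=> p; have [j [jlt Pj]] := cP p.
  have -> : k p = h (t j).
    rewrite /k (bigD1 (Ordinal jlt)) //= big1 ?addr0.
      by rewrite indT // mulr1.
    move=> i ij; have [Pi|nPi] := pselect (P i p); last by rewrite indF // mulr0.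
    exfalso; apply: (disj_pt (i := i) (j := j) dP (ltn_ord i) jlt _ Pi Pj).
    by move=> e'; move: ij; rewrite -val_eqE /= e' eqxx.
  exact: (osc j jlt p (t j) Pj (ht j (ex_intro _ p Pj))).1.
have bk : bnd k by exact: (bnd_sum n (fun i => h (t i)) P).
have up : L h <= S + e.
  rewrite -LS.
  have -> : L k + e = L (lin 1 k (fun _ => e)).
    rewrite Llin //; last by exists `|e| => _.
    have -> : (fun _ : Mt M => e) = lin e one (@zf R (Mt M)).
      by apply/funext => p; rewrite /lin /one /zf; ring.
    rewrite Llin; [|exact: bnd_one|exact: bnd_zf].
    by rewrite L_one L_zf; ring.
  apply: L_mono => //; first by apply: bnd_lin => //; exists `|e| => _.
  by move=> p; rewrite /lin mul1r; have := close p; rewrite ler_norml => /andP[]; lra.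
have dn' : S - e <= L h.
  rewrite -LS.
  have -> : L k - e = L (lin 1 k (fun _ => - e)).
    rewrite Llin //; last by exists `|- e| => _.
    have -> : (fun _ : Mt M => - e) = lin (- e) one (@zf R (Mt M)).
      by apply/funext => p; rewrite /lin /one /zf; ring.
    rewrite Llin; [|exact: bnd_one|exact: bnd_zf].
    by rewrite L_one L_zf; ring.
  apply: L_mono => //; first by apply: bnd_lin => //; exists `|- e| => _.
  by move=> p; rewrite /lin mul1r; have := close p; rewrite ler_norml => /andP[]; lra.
move: T; rewrite !ler_norml => /andP[a b]; apply/andP; split; lra.
Qed.

End WithPt.
Lemma dir2_main :
  (forall mu : set (Mt M) -> R, optimal d z mu -> totvar mu = 1 ->
   forall gamma : R, 0 < gamma < 1 ->
   exists (A : set (Mt M)) (u v : M),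
     u <> v /\ gamma <= mu A /\
     cyc_monotone d gamma ((@proj1_sig _ _) @` A `|` [set (u, v)]) /\
     cyc_monotone d gamma ((@proj1_sig _ _) @` A `|` [set (v, u)])) ->
  forall alpha : R, 0 < alpha -> diam_Lip d (slice d z phi alpha) = 2.
Proof.
move=> H alpha a0.
have [t0 _] := ex_pt.
have [L [Llin Lle Lext]] := ex_Lambda t0.
pose mu := muL L.
have fa : fin_additive mu := muL_fa Llin.
have pos : positive_measure mu := muL_pos t0 Llin Lle.
have mT : mu setT = 1 := muL_T t0 Llin Lle.
have sumle : forall n A, disj_family n A -> \sum_(i < n) `|mu (A i)| <= 1.
  move=> n A dA.
  pose S := fun p => exists i, (i < n)%N /\ A i p.
  have e : \sum_(i < n) `|mu (A i)| = mu S.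
    rewrite (mu_split fa dA (S := S)) //; apply: eq_bigr => i _.
    rewrite ger0_norm; last exact: pos.
    congr mu; apply/seteqP; split => [p Ap|p [_ Ap]] //.
    by split => //; exists i.
  by rewrite e -mT; apply: mu_mono.
have tv : totvar mu = 1.
  apply/eqP; rewrite eq_le; apply/andP; split.
    by apply: sup_le_of => // r [n [A [dA ->]]]; exact: sumle.
  apply: (sup_ub_of (B := 1)); first by move=> r [n [A [dA ->]]]; exact: sumle.
  exists 1%N, (@triv M); split; first exact: triv_disj.
  by rewrite big_ord1 mT normr1.
have opt : optimal d z mu.
  split; first by split => //; exists 1.
  split => //; rewrite tv -dn /dualnorm; congr sup.
  apply/seteqP; split => r [f [uf ->]]; exists f; split => //.
    by rewrite /Phistar (L_I t0 Llin Lle (deLeeuw_bnd hd uf.1.1)) Lext //; exact: uf.1.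
  by rewrite /Phistar (L_I t0 Llin Lle (deLeeuw_bnd hd uf.1.1)) Lext //; exact: uf.1.
pose DE := [set r | exists f g, slice d z phi alpha f /\
     slice d z phi alpha g /\ r = lipnorm d (fun x => f x - g x)].
have DEb : forall r, DE r -> r <= 2.
  move=> r [f [g [[[[lf _] nf] _] [[[[lg _] ng] _] ->]]]].
  apply: lipnorm_le => // x y.
  have := lip_bound hd x y lf nf; have := lip_bound hd x y lg ng.
  have -> : f x - g x - (f y - g y) = (f x - f y) - (g x - g y) by ring.
  move=> h1 h2; apply: le_trans (ler_normB _ _) _; lra.
have key : forall gamma, 0 < gamma < 1 -> 1 - alpha < gamma * gamma + gamma - 1 ->
    2 * gamma <= sup DE.
  move=> gamma g01 ga.
  have [A [u [v [uv [hA [cm1 cm2]]]]]] := H mu opt tv gamma g01.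
  have [F1 [l1 k1 z1]] := fun_of_cm z hd (b0 := (u, v)) (or_intror erefl) cm1.
  have [F2 [l2 k2 z2]] := fun_of_cm z hd (b0 := (v, u)) (or_intror erefl) cm2.
  have ball : forall F, (forall x y, `|F x - F y| <= d x y) -> F z = 0 -> unit_ball d z F.
    move=> F lF zF; split; first by split => //; exists 1 => x y; rewrite mul1r.
    by apply: lipnorm_le => // x y; rewrite mul1r.
  have val : forall F, (forall x y, `|F x - F y| <= d x y) -> F z = 0 ->
      (forall q, ((@proj1_sig _ _) @` A) q -> gamma * d q.1 q.2 <= F q.1 - F q.2) ->
      1 - alpha < phi F.
    move=> F lF zF kF.
    have uF := ball F lF zF.
    rewrite -(Lext F uF.1).
    have bF : bnd (deLeeuw d F) := deLeeuw_bnd hd uF.1.1.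
    pose lo := lin gamma (ind A) (lin (-1) (ind (~` A)) (@zf R (Mt M))).
    have blo : bnd lo by apply: bnd_lin; [exact: bnd_ind|apply: bnd_lin; [exact: bnd_ind|exact: bnd_zf]].
    have le1 : L lo <= L (deLeeuw d F).
      apply: (L_mono t0 Llin Lle blo bF) => p.
      case: p => [[x y] xy]; rewrite /lo /lin /zf /deLeeuw /=.
      have dxy := d_gt0 hd xy.
      have [Ap|nAp] := pselect (A (exist _ (x, y) xy)).
        rewrite (indT Ap) (@indF (~` A)); last by apply.
        rewrite ler_pdivlMr //.
        have := kF (x, y) (ex_intro2 _ _ _ Ap erefl); rewrite /=; lra.
      rewrite (@indF A) // (@indT (~` A)) //.
      rewrite ler_pdivlMr //; have := lF x y; rewrite ler_norml => /andP[? ?]; lra.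
    have e1 : L lo = gamma * mu A - mu (~` A).
      rewrite /lo Llin; [|exact: bnd_ind|apply: bnd_lin; [exact: bnd_ind|exact: bnd_zf]].
      rewrite Llin; [|exact: bnd_ind|exact: bnd_zf].
      by rewrite (L_zf Llin) /mu /muL; ring.
    have e2 : mu A + mu (~` A) = 1.
      rewrite -fa; last by apply/seteqP; split => // p [].
      by rewrite setUv.
    have : (1 + gamma) * gamma - 1 <= (1 + gamma) * mu A - 1.
      by have := ler_wpM2l (x := 1 + gamma) _ hA; move: g01 => /andP[? ?]; lra.
    move: g01 => /andP[? ?]; lra.
  have v1 := val F1 l1 z1 (fun q hq => k1 q (or_introl hq)).
  have v2 := val F2 l2 z2 (fun q hq => k2 q (or_introl hq)).
  have u1 := ball F1 l1 z1; have u2 := ball F2 l2 z2.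
  apply: (@le_trans _ _ (lipnorm d (fun x => F1 x - F2 x))); last first.
    apply: (sup_ub_of (B := 2)) => //.
    by exists F1, F2; split; [split|split; [split|]].
  have l12 : lipschitz d (fun x => F1 x - F2 x).
    exists 2 => x y; have := l1 x y; have := l2 x y.
    have -> : F1 x - F2 x - (F1 y - F2 y) = (F1 x - F1 y) - (F2 x - F2 y) by ring.
    move=> h1 h2; apply: le_trans (ler_normB _ _) _; lra.
  apply: le_trans (lip_ratio hd l12 uv).
  have dxy := d_gt0 hd uv.
  rewrite ler_pdivlMr //.
  have := k1 (u, v) (or_intror erefl); have := k2 (v, u) (or_intror erefl).
  rewrite /= (d_sym hd v u) => h2 h1.
  apply: le_trans (ler_norm _); lra.
have DEle : sup DE <= 2 by apply: sup_le_of => //.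
have -> : diam_Lip d (slice d z phi alpha) = sup DE by [].
apply/eqP; rewrite eq_le DEle /=.
apply: eps_le => e e0.
pose m := Num.min e (Num.min alpha 1).
have m0 : 0 < m by rewrite /m !lt_min e0 a0 ltr01.
have me : m <= e by rewrite /m ge_min lexx.
have ma : m <= alpha by rewrite /m !ge_min lexx orbT.
have m1 : m <= 1 by rewrite /m !ge_min lexx !orbT.
have := key (1 - m / 4).
have -> : (0 < 1 - m / 4 < 1) = true by apply/andP; split; lra.
move=> /(_ isT).
have -> : (1 - alpha < (1 - m / 4) * (1 - m / 4) + (1 - m / 4) - 1) = true.
  apply/idP; have : 0 <= m * m by nra.
  lra.
move=> /(_ isT); lra.
Qed.
End Dir2.


Unset Implicit Arguments.

Theorem proposition3p2 (R : realType) (M : Type) (d : M -> M -> R) (z : M)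
  (hd : is_metric d) :
  LD2P d z <->
  (forall mu : set (Mt M) -> R, optimal d z mu -> totvar mu = 1 ->
   forall gamma : R, 0 < gamma < 1 ->
   exists (A : set (Mt M)) (u v : M),
     u <> v /\ gamma <= mu A /\
     cyc_monotone d gamma ((@proj1_sig _ _) @` A `|` [set (u, v)]) /\
     cyc_monotone d gamma ((@proj1_sig _ _) @` A `|` [set (v, u)])).
Proof.
split; first exact: dir1.
move=> H phi isd dn alpha a0.
exact: (dir2_main hd isd dn H a0).
Qed.
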